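(* Let $(\varepsilon_k)_{k\ge0}$ be an infinite sequence of real one-particle energies with $\sum_ke^{-\beta\varepsilon_k}<\infty$ for some $\beta>0$. For $N\ge1$ consider the canonical $N$-particle distribution of noninteracting bosons on occupation sequences $(n_k)_{k\ge0}$ of nonnegative integers with $\sum_kn_k=N$, $P_N((n_k))\propto e^{-\beta\sum_k\varepsilon_kn_k}$, and write $\langle n_k\rangle_N$ for its expectations. If $\varepsilon_i<\varepsilon_j$, then $\langle n_j\rangle_N<\langle n_i\rangle_N$. *)

(* Defs.v *)
From mathcomp Require Import all_boot all_order all_algebra.
From mathcomp Require Import all_classical all_reals all_analysis.
Set Implicit Arguments. Unset Strict Implicit. Unset Printing Implicit Defensive.
Import Order.TTheory GRing.Theory Num.Theory numFieldNormedType.Exports.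
Local Open Scope classical_set_scope.
Local Open Scope ring_scope.

(* Occupation sequences (n_k)_{k>=0} of nonnegative integers with sum_k n_k = N
   (the sum being finite forces finite support; written out explicitly). *)
Definition occupations (N : nat) : set (nat -> nat) :=
  [set n | exists M : nat, (forall k, (M <= k)%N -> n k = 0%N) /\
                            (\sum_(k < M) n k)%N = N].

(* Total energy sum_k eps_k n_k (a finite sum for finitely supported n). *)
Definition energy {R : realType} (eps : nat -> R) (n : nat -> nat) : R :=
  limn (fun M => \sum_(k < M) eps k * (n k)%:R).

Definition bweight {R : realType} (beta : R) (eps : nat -> R) (n : nat -> nat) : R :=
  expR (- (beta * energy eps n)).

Definition partition_fun {R : realType} (beta : R) (eps : nat -> R) (N : nat)
  : \bar R :=
  esum (occupations N) (fun n => (bweight beta eps n)%:E).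

Definition mean_occ {R : realType} (beta : R) (eps : nat -> R) (N k : nat) : R :=
  fine (esum (occupations N) (fun n => ((n k)%:R * bweight beta eps n)%:E))
  / fine (partition_fun beta eps N).

(* Main.v *)
Require Import Defs.
From mathcomp Require Import all_boot all_order all_algebra.
From mathcomp Require Import all_classical all_reals all_analysis.
From mathcomp Require Import ring lra zify.
Import Order.TTheory GRing.Theory Num.Theory numFieldNormedType.Exports.
Local Open Scope classical_set_scope.
Local Open Scope ring_scope.
Set Implicit Arguments. Unset Strict Implicit.

Definition supp (n : nat -> nat) (M : nat) := forall k, (M <= k)%N -> n k = 0%N.

Lemma supp_mono n M M' : supp n M -> (M <= M')%N -> supp n M'.
Proof. move=> h le k hk; apply: h; exact: leq_trans hk. Qed.

Lemma sum_widen_nat (n : nat -> nat) M0 M : supp n M0 -> (M0 <= M)%N ->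
  (\sum_(k < M) n k = \sum_(k < M0) n k)%N.
Proof.
move=> h le; rewrite -!(big_mkord xpredT) (big_cat_nat (leq0n M0) le) /=.
suff -> : (\sum_(M0 <= i < M) n i = 0)%N by rewrite addn0.
rewrite big_nat_cond big1 // => k /andP[/andP[hk _] _]; exact: h.
Qed.

Lemma sum_widen_R (R : realType) (f : nat -> R) M0 M :
  (forall k, (M0 <= k)%N -> f k = 0) -> (M0 <= M)%N ->
  \sum_(k < M) f k = \sum_(k < M0) f k.
Proof.
move=> h le; rewrite -!(big_mkord xpredT) (big_cat_nat (leq0n M0) le) /=.
suff -> : \sum_(M0 <= i < M) f i = 0 by rewrite addr0.
rewrite big_nat_cond big1 // => k /andP[/andP[hk _] _]; exact: h.
Qed.

Lemma energyE (R : realType) (eps : nat -> R) n M0 M : supp n M0 -> (M0 <= M)%N ->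
  energy eps n = \sum_(k < M) eps k * (n k)%:R.
Proof.
move=> h le; rewrite /energy; apply: lim_near_cst => //.
have hz : forall k, (M0 <= k)%N -> eps k * (n k)%:R = 0 by move=> k hk; rewrite h ?mulr0.
exists M => // m /= hm.
rewrite (@sum_widen_R _ (fun k => eps k * (n k)%:R) _ _ hz (leq_trans le hm)).
by rewrite (@sum_widen_R _ (fun k => eps k * (n k)%:R) _ _ hz le).
Qed.

Lemma bweightE (R : realType) (beta : R) (eps : nat -> R) n M0 M : supp n M0 -> (M0 <= M)%N ->
  bweight beta eps n = \prod_(k < M) expR (- (beta * eps k)) ^+ n k.
Proof.
move=> h le; rewrite /bweight (energyE _ h le) mulr_sumr -sumrN expR_sum.
apply: eq_bigr => k _; rewrite -expRM_natl; congr expR; ring.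
Qed.

Lemma occP N n : occupations N n ->
  exists M, supp n M /\ forall M', (M <= M')%N -> (\sum_(k < M') n k)%N = N.
Proof.
case=> M [h hs]; exists M; split => // M' le; by rewrite (sum_widen_nat h le).
Qed.

Lemma occ_le N n k : occupations N n -> (n k <= N)%N.
Proof.
move=> /occP [M [h hs]]; rewrite -(hs (maxn M k.+1)) ?leq_maxl //.
have hk : (k < maxn M k.+1)%N by rewrite leq_max ltnSn orbT.
by rewrite (bigD1 (Ordinal hk)) //= leq_addr.
Qed.

Section Bound.
Variables (R : realType) (beta : R) (eps : nat -> R) (N : nat).
Let x k := expR (- (beta * eps k)).
Hypothesis hsum : cvgn (series x).
Let X := limn (series x).

Lemma x_ge0 k : 0 <= x k. Proof. exact: expR_ge0. Qed.

Lemma psum_le M : \sum_(k < M) x k <= X.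
Proof.
have -> : \sum_(k < M) x k = series x M by rewrite seriesEord.
apply: nondecreasing_cvgn_le => // n m le; rewrite !seriesEord /=.
rewrite -!(big_mkord xpredT) (big_cat_nat (leq0n n) le) /= lerDl.
by apply: sumr_ge0 => k _; exact: x_ge0.
Qed.

Let B := 1 + X.
Let K := N%:R * B ^+ N.

Lemma X_ge0 : 0 <= X.
Proof. by have := psum_le 0; rewrite big_ord0. Qed.

Lemma factor_le k : \sum_(a < N.+1) x k ^+ a <= 1 + K * x k.
Proof.
rewrite big_ord_recl expr0 lerD2l.
have hxB : x k <= B.
  have := psum_le k.+1; rewrite big_ord_recr /= => h.
  move: h; set S := \sum_(i < k) _ => h.
  have h0 : 0 <= S by apply: sumr_ge0 => *; exact: x_ge0.
  rewrite /B; lra.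
have hB1 : 1 <= B by rewrite /B lerDl X_ge0.
apply: (@le_trans _ _ (\sum_(a < N) (x k * B ^+ N))).
  apply: ler_sum => a _; rewrite /bump /= exprS ler_wpM2l ?x_ge0 //.
  apply: (@le_trans _ _ (B ^+ a)).
    by apply: lerXn2r => //; rewrite ?nnegrE ?x_ge0 // (le_trans ler01 hB1).
  by apply: ler_weXn2l => //; apply: ltnW.
rewrite sumr_const card_ord /K -mulr_natl.
have -> : x k * B ^+ N *+ N = N%:R * 1 * B ^+ N * x k by rewrite -mulr_natr; ring.
done.

Qed.

Lemma K_ge0 : 0 <= K.
Proof. by rewrite /K mulr_ge0 // exprn_ge0 // /B addr_ge0 // X_ge0. Qed.

Definition Bd := expR (K * X).

Lemma seq_bound (s : seq (nat -> nat)) : uniq s ->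
  (forall n, n \in s -> occupations N n) ->
  \sum_(n <- s) bweight beta eps n <= Bd.
Proof.
move=> us hs.
have [M hM] : exists M, forall n, n \in s -> supp n M.
  elim: s {us} hs => [|a s IH] hs; first by exists 0%N.
  have [M1 h1] : exists M, forall n, n \in s -> supp n M.
    by apply: IH => n hn; apply: hs; rewrite inE hn orbT.
  have [M2 [h2 _]] := occP (hs a (mem_head a s)).
  exists (maxn M1 M2) => n; rewrite inE => /orP[/eqP->|hn].
    by apply: supp_mono h2 _; rewrite leq_maxr.
  by apply: supp_mono (h1 n hn) _; rewrite leq_maxl.
pose phi (n : nat -> nat) : {ffun 'I_M -> 'I_N.+1} := [ffun k : 'I_M => inord (n k)].
pose W (g : {ffun 'I_M -> 'I_N.+1}) := \prod_(k < M) x k ^+ g k.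
have hW : forall n, n \in s -> bweight beta eps n = W (phi n).
  move=> n hn; rewrite (bweightE beta eps (hM n hn) (leqnn M)).
  apply: eq_bigr => k _; rewrite ffunE inordK // ltnS; exact: occ_le (hs n hn).
rewrite (eq_big_seq (fun n => W (phi n))); last by move=> n hn; exact: hW.
rewrite -(big_map phi xpredT W).
have um : uniq (map phi s).
  rewrite map_inj_in_uniq // => n m hn hm he; apply: funext => k.
  case: (ltnP k M) => hk; last by rewrite (hM n hn k hk) (hM m hm k hk).
  move/ffunP: he => /(_ (Ordinal hk)); rewrite !ffunE => /(congr1 val) /=.
  rewrite !inordK // ltnS; [exact: occ_le (hs m hm)|exact: occ_le (hs n hn)].
apply: (@le_trans _ _ (\sum_g W g)).
  rewrite big_uniq // [X in _ <= X](bigID (fun g => g \in map phi s)) /= lerDl.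
  by apply: sumr_ge0 => g _; apply: prodr_ge0 => k _; apply: exprn_ge0; exact: x_ge0.
rewrite /W -(bigA_distr_bigA (fun (k : 'I_M) (a : 'I_N.+1) => x k ^+ a)) /=.
apply: (@le_trans _ _ (\prod_(k < M) expR (K * x k))).
  apply: ler_prod => k _; apply/andP; split.
    by apply: sumr_ge0 => a _; apply: exprn_ge0; exact: x_ge0.
  exact: le_trans (factor_le k) (expR_ge1Dx _).
rewrite -expR_sum /Bd ler_expR -mulr_sumr ler_wpM2l ?K_ge0 //; exact: psum_le.
Qed.

End Bound.

Lemma esum_bound (R : realType) (beta : R) (eps : nat -> R) (N : nat)
  (hsum : cvgn (series (fun k => expR (- (beta * eps k)))))
  (f : (nat -> nat) -> R) (C : R) : 0 <= C ->
  (forall n, occupations N n -> 0 <= f n <= C * bweight beta eps n) ->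
  (esum (occupations N) (fun n => (f n)%:E) <= (C * Bd beta eps N)%:E)%E.
Proof.
move=> C0 hf; apply: ge_ereal_sup => _ [A [finA AS] <-].
rewrite fsbig_finite //= sumEFin lee_fin.
set s := finmap.enum_fset _.
have hs : forall n, n \in s -> occupations N n.
  by move=> n hn; apply: AS; move: hn; rewrite in_fset_set // inE.
apply: (@le_trans _ _ (C * \sum_(n <- s) bweight beta eps n)).
  rewrite mulr_sumr big_seq [X in _ <= X]big_seq; apply: ler_sum => n hn.
  by case/andP: (hf n (hs n hn)).
by rewrite ler_wpM2l // (seq_bound hsum) // finmap.fset_uniq.
Qed.

Lemma sum_two (R : realType) (D : nat -> R) M i j : i != j -> (i < M)%N -> (j < M)%N ->
  (forall k, k != i -> k != j -> D k = 0) -> \sum_(k < M) D k = D i + D j.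
Proof.
move=> ij hi hj hD.
rewrite (bigD1 (Ordinal hi)) //= (bigD1 (Ordinal hj)) /=; last first.
  by rewrite -(inj_eq val_inj) /= eq_sym.
rewrite big1 ?addr0 ?addrA // => k /andP[h1 h2]; apply: hD.
  by move: h1; rewrite -(inj_eq val_inj).
by move: h2; rewrite -(inj_eq val_inj).
Qed.

Section Main.
Variables (R : realType) (eps : nat -> R) (beta : R) (N : nat) (i j : nat).
Hypothesis hbeta : 0 < beta.
Hypothesis hij : eps i < eps j.

Lemma ij_neq : i != j.
Proof. by apply/eqP => e; move: hij; rewrite e ltxx. Qed.

Definition sw k := if k == i then j else if k == j then i else k.
Definition sig (n : nat -> nat) := fun k => n (sw k).

Lemma sw_i : sw i = j. Proof. by rewrite /sw eqxx. Qed.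
Lemma sw_j : sw j = i. Proof. by rewrite /sw eq_sym (negbTE ij_neq) eqxx. Qed.
Lemma sw_other k : k != i -> k != j -> sw k = k.
Proof. by move=> h1 h2; rewrite /sw (negbTE h1) (negbTE h2). Qed.
Lemma sw_sw k : sw (sw k) = k.
Proof.
case: (eqVneq k i) => [->|h1]; first by rewrite sw_i sw_j.
case: (eqVneq k j) => [->|h2]; first by rewrite sw_j sw_i.
by rewrite !sw_other.
Qed.
Lemma sig_sig n : sig (sig n) = n.
Proof. by apply: funext => k; rewrite /sig sw_sw. Qed.

Lemma big_M n M : supp n M -> exists M', [/\ (M <= M')%N, (i < M')%N, (j < M')%N & supp (sig n) M'].
Proof.
move=> hs; exists (maxn M (maxn i j).+1); split; try lia.
move=> k hk; rewrite /sig sw_other.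
- by apply: hs; lia.
- apply/eqP => e; lia.
- apply/eqP => e; lia.
Qed.

Lemma sig_occ n : occupations N n -> occupations N (sig n).
Proof.
move=> /occP [M [hs hsum]].
have [M' [le hi hj hs']] := big_M hs.
exists M'; split => //.
apply/eqP; rewrite -(eqr_nat R) -(hsum M' le) !natr_sum -subr_eq0 -sumrB.
rewrite (@sum_two _ (fun k => (sig n k)%:R - (n k)%:R) _ _ _ ij_neq hi hj); first by rewrite /sig sw_i sw_j; apply/eqP; ring.
by move=> k h1 h2; rewrite /sig sw_other // subrr.
Qed.

Lemma sig_bij : set_bij (occupations N) (occupations N) sig.
Proof.
split.
- by move=> n hn; exact: sig_occ.
- by move=> n m _ _ e; rewrite -(sig_sig n) e sig_sig.
- by move=> m hm; exists (sig m); [exact: sig_occ|rewrite sig_sig].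
Qed.

Lemma energy_sig n : occupations N n ->
  energy eps (sig n) - energy eps n = (eps i - eps j) * ((n j)%:R - (n i)%:R).
Proof.
move=> /occP [M [hs _]].
have [M' [le hi hj hs']] := big_M hs.
rewrite (energyE eps hs' (leqnn M')) (energyE eps hs le) -sumrB.
rewrite (@sum_two _ (fun k => eps k * (sig n k)%:R - eps k * (n k)%:R) _ _ _ ij_neq hi hj).
  by rewrite /sig sw_i sw_j; ring.
by move=> k h1 h2; rewrite /sig sw_other // subrr.
Qed.

Let w n := bweight beta eps n.

Lemma pointwise n : occupations N n ->
  (n j)%:R * w n + (n i)%:R * w (sig n) <= (n i)%:R * w n + (n j)%:R * w (sig n)
  /\ ((n i < n j)%N -> (n j)%:R * w n + (n i)%:R * w (sig n) < (n i)%:R * w n + (n j)%:R * w (sig n)).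
Proof.
move=> hn; have he := energy_sig hn.
rewrite /w /bweight.
set e := energy eps n in he *; set e' := energy eps (sig n) in he *.
set a : R := (n j)%:R in he *; set b : R := (n i)%:R in he *.
have hd : 0 < eps j - eps i by rewrite subr_gt0.
split; last first.
  move=> lt; have hab : b < a by rewrite ltr_nat.
  have h1 : 0 < (eps j - eps i) * (a - b) by rewrite mulr_gt0 // subr_gt0.
  have h2 : 0 < beta * ((eps j - eps i) * (a - b)) by rewrite mulr_gt0.
  have : expR (- (beta * e)) < expR (- (beta * e')).
    rewrite ltr_expR; nra.
  nra.
case: (lerP b a) => hab.
  have h1 : 0 <= (eps j - eps i) * (a - b) by rewrite mulr_ge0 // ?subr_ge0 // ltW.
  have h2 : 0 <= beta * ((eps j - eps i) * (a - b)) by rewrite mulr_ge0 // ltW.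
  have : expR (- (beta * e)) <= expR (- (beta * e')).
    rewrite ler_expR; nra.
  nra.
have h1 : 0 <= (eps j - eps i) * (b - a) by rewrite mulr_ge0 // subr_ge0 ltW.
have h2 : 0 <= beta * ((eps j - eps i) * (b - a)) by rewrite mulr_ge0 // ltW.
have : expR (- (beta * e')) <= expR (- (beta * e)).
  rewrite ler_expR; nra.
nra.
Qed.

End Main.

Theorem lemma6 (R : realType) (eps : nat -> R) (beta : R) (hbeta : 0 < beta)
  (hsum : cvgn (series (fun k => expR (- (beta * eps k)))))
  (N : nat) (hN : (1 <= N)%N) (i j : nat) (hij : eps i < eps j) :
  mean_occ beta eps N j < mean_occ beta eps N i.
Proof.
set occ := occupations N.
pose w n := bweight beta eps n.
have ijn := ij_neq hij.
pose n0 : nat -> nat := fun k => if k == j then N else 0%N.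
have n0occ : occ n0.
  exists j.+1; split.
    by move=> k hk; rewrite /n0 ifF //; apply/negbTE; apply/eqP => e; lia.
  rewrite big_ord_recr /= big1 ?add0n; first by rewrite /n0 eqxx.
  move=> k _; rewrite /n0 ifF //; apply/negbTE; rewrite neq_ltn /= ltn_ord //.
have n0j : n0 j = N by rewrite /n0 eqxx.
have n0i : n0 i = 0%N by rewrite /n0 (negbTE ijn).
have w_ge0 n : 0 <= w n by exact: expR_ge0.
have w_gt0 n : 0 < w n by exact: expR_gt0.
have fin (f : (nat -> nat) -> R) (C : R) : 0 <= C ->
    (forall n, occ n -> 0 <= f n <= C * w n) ->
    esum occ (fun n => (f n)%:E) \is a fin_num.
  move=> C0 hf; rewrite ge0_fin_numE.
    exact: le_lt_trans (esum_bound hsum C0 hf) (ltry _).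
  by apply: esum_ge0 => n hn; rewrite lee_fin; case/andP: (hf n hn).
pose S k := esum occ (fun n => ((n k)%:R * w n)%:E).
have Sfin k : S k \is a fin_num.
  apply: (@fin _ N%:R) => // n hn; rewrite mulr_ge0 //= ler_wpM2r // ler_nat.
  exact: occ_le.
have Zfin : partition_fun beta eps N \is a fin_num.
  by apply: (@fin _ 1) => // n hn; rewrite mul1r lexx w_ge0.
have Zpos : (0 < partition_fun beta eps N)%E.
  apply: (@lt_le_trans _ _ (w n0)%:E); first by rewrite lte_fin.
  apply: esum_ge; exists [set n0]; first by split; [exact: finite_set1|move=> ? ->].
  by rewrite fsbig_set1.
have Sj2 : S j = esum occ (fun n => ((n i)%:R * w (sig i j n))%:E).
  rewrite /S (@reindex_esum R _ _ occ occ (sig i j) _ (sig_bij N hbeta hij)).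
  by apply: eq_esum => n _; rewrite /sig (sw_j hij).
have Si2 : S i = esum occ (fun n => ((n j)%:R * w (sig i j n))%:E).
  rewrite /S (@reindex_esum R _ _ occ occ (sig i j) _ (sig_bij N hbeta hij)).
  by apply: eq_esum => n _; rewrite /sig (sw_i i j).
pose D n := ((n i)%:R * w n + (n j)%:R * w (sig i j n))
          - ((n j)%:R * w n + (n i)%:R * w (sig i j n)).
have hF : (S j + S j = esum occ (fun n => ((n j)%:R * w n)%:E + ((n i)%:R * w (sig i j n))%:E))%E.
  by rewrite {2}Sj2 esumD // => n _; rewrite lee_fin mulr_ge0.
have hG : (S i + S i = esum occ (fun n => ((n j)%:R * w n)%:E + ((n i)%:R * w (sig i j n))%:E)
            + esum occ (fun n => (D n)%:E))%E.
  rewrite -esumD; last first.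
  - by move=> n hn; rewrite lee_fin subr_ge0; case: (pointwise hbeta hij hn).
  - by move=> n _; rewrite adde_ge0 // lee_fin mulr_ge0.
  rewrite {2}Si2 -esumD; try by move=> n _; rewrite lee_fin mulr_ge0.
  apply: eq_esum => n _; rewrite /D -!EFinD; congr (_%:E); ring.
have hD : ((D n0)%:E <= esum occ (fun n => (D n)%:E))%E.
  apply: esum_ge; exists [set n0]; first by split; [exact: finite_set1|move=> ? ->].
  by rewrite fsbig_set1.
have hD0 : 0 < D n0.
  rewrite /D subr_gt0; apply: (proj2 (pointwise hbeta hij n0occ)).
  by rewrite n0i n0j.
rewrite -hF -(fineK (Sfin j)) -(fineK (Sfin i)) in hG.
rewrite -!EFinD in hG.
have : ((fine (S j) + fine (S j)) + D n0 <= fine (S i) + fine (S i)).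
  by rewrite -lee_fin hG !EFinD; apply: leeD2l.
move=> hlt.
rewrite /mean_occ ltr_pM2r ?invr_gt0; last first.
  by apply: fine_gt0; rewrite Zpos /= -ge0_fin_numE ?Zfin // ltW.
rewrite -/(S j) -/(S i). lra.
Qed.
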